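(* For a no-slip billiard system in a general billiard domain $\mathcal{B}\subset\mathbb{R}^n$ (not necessarily a cylinder), if the pre-collision state $(a,u,U)$ at a regular boundary point $a$ satisfies the rolling impact condition, then the post-collision state is given by $$C_a(u,U)=\big(u-2(u\cdot\nu_a)\nu_a,\ U\big),$$ i.e. the center-of-mass velocity is reflected specularly and the angular velocity matrix is unchanged.
   Context: The particle is a ball of radius $r>0$ with rotationally symmetric mass distribution of total mass $m$ and second-moment matrix per unit mass $\lambda I$, $\lambda=(r\gamma)^2/2$, $\gamma>0$; $c=\frac{1-\gamma^2}{1+\gamma^2}$, $s=\frac{2\gamma}{1+\gamma^2}$; for $a,b\in\mathbb{R}^n$, $a\wedge b\in\mathfrak{so}(n)$ is $(a\wedge b)x=(a\cdot x)b-(b\cdot x)a$. $\mathcal{B}$ is the set of admissible centers, $\nu_a$ the unit normal at $a\in\partial\mathcal{B}$ pointing into $\mathcal{B}$. A state is $(a,u,U)$, $u$ the center-of-mass velocity, $U\in\mathfrak{so}(n)$ the angular velocity matrix. The no-slip collision map is $C_a(u,U)=\big(cu-\tfrac{s}{\gamma}(u\cdot\nu_a)\nu_a+s\gamma rU\nu_a,\ \tfrac{s}{\gamma r}\nu_a\wedge u+U-\tfrac{s}{\gamma}\nu_a\wedge U\nu_a\big)$. The pre-collision state $(a,u,U)$ satisfies the rolling impact condition if the orthogonal projection of $v=u-rU\nu_a$ onto $T_a\partial\mathcal{B}$ is zero. *)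

(* Defs.v *)
(* Vectors of R^n are column vectors 'cV[R]_n,
   elements of so(n) are n x n matrices acting on column vectors. *)
From mathcomp Require Import all_boot all_order all_algebra.
Set Implicit Arguments. Unset Strict Implicit. Unset Printing Implicit Defensive.
Import Order.TTheory GRing.Theory Num.Theory.
Local Open Scope ring_scope.

Section NoSlip.
Variables (R : realFieldType) (n : nat).

Definition dotv (x y : 'cV[R]_n) : R := \sum_(i < n) x i 0 * y i 0.

Definition is_so (U : 'M[R]_n) : Prop := U^T = - U.

(* a /\ b in so(n), (a /\ b) x = (a . x) b - (b . x) a *)
Definition wedge (a b : 'cV[R]_n) : 'M[R]_n := b *m a^T - a *m b^T.

(* Tangent space T_a dB at a regular boundary point with unit normal nu:
   the orthogonal complement of nu. *)
Definition tangent_space (nu : 'cV[R]_n) : 'cV[R]_n -> Prop :=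
  fun x => dotv x nu = 0.

(* Orthogonal projection onto nu^perp, for a unit vector nu. *)
Definition proj_tangent (nu v : 'cV[R]_n) : 'cV[R]_n := v - dotv v nu *: nu.

Definition cgam (gamma : R) : R := (1 - gamma ^+ 2) / (1 + gamma ^+ 2).
Definition sgam (gamma : R) : R := (2 * gamma) / (1 + gamma ^+ 2).

Definition collision (r gamma : R) (nu : 'cV[R]_n) (u : 'cV[R]_n) (U : 'M[R]_n)
  : 'cV[R]_n * 'M[R]_n :=
  ( cgam gamma *: u - (sgam gamma / gamma * dotv u nu) *: nu
      + (sgam gamma * gamma * r) *: (U *m nu),
    (sgam gamma / (gamma * r)) *: wedge nu u + U
      - (sgam gamma / gamma) *: wedge nu (U *m nu) ).

Definition rolling_impact (r : R) (nu : 'cV[R]_n) (u : 'cV[R]_n) (U : 'M[R]_n)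
  : Prop := proj_tangent nu (u - r *: (U *m nu)) = 0.

End NoSlip.

(* Main.v *)
Require Import Defs.
From mathcomp Require Import all_boot all_order all_algebra.
From mathcomp Require Import ring lra.
Import Order.TTheory GRing.Theory Num.Theory.
Local Open Scope ring_scope.

Lemma dotvE (R : realFieldType) (n : nat) (x y : 'cV[R]_n) :
  dotv x y = (x^T *m y) 0 0.
Proof. by rewrite /dotv mxE; apply: eq_bigr => i _; rewrite mxE. Qed.

Theorem proposition6p1 (R : realFieldType) (n : nat) (r gamma : R)
  (nu u : 'cV[R]_n) (U : 'M[R]_n) :
  0 < r -> 0 < gamma ->
  dotv nu nu = 1 ->
  is_so U ->
  rolling_impact r nu u U ->
  collision r gamma nu u U = (u - (2 * dotv u nu) *: nu, U).
Proof.
move=> r0 g0 nn sk roll.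
have wn : dotv (U *m nu) nu = 0.
  have e : (nu^T *m (U *m nu)) 0 0 = - (nu^T *m (U *m nu)) 0 0.
    have hT : (nu^T *m (U *m nu))^T = - (nu^T *m (U *m nu)).
      by rewrite !trmx_mul trmxK sk mulmxN mulNmx mulmxA.
    move: (congr1 (fun M : 'M[R]_1 => M 0 0) hT) => /=.
    by rewrite [X in X = _]mxE [X in _ = X]mxE.
  have dw : dotv (U *m nu) nu = (nu^T *m (U *m nu)) 0 0.
    rewrite /dotv mxE; apply: eq_bigr => i _; by rewrite [nu^T _ _]mxE mulrC.
  rewrite dw; move: e; set x := (_ 0 0) => e; lra.
have dlin : dotv (u - r *: (U *m nu)) nu = dotv u nu.
  transitivity (dotv u nu - r * dotv (U *m nu) nu); last by rewrite wn mulr0 subr0.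
  rewrite /dotv mulr_sumr -sumrB.
  by apply: eq_bigr => i _; rewrite !mxE; ring.
rewrite /collision; move: roll; rewrite /rolling_impact /proj_tangent dlin.
move: wn (U *m nu) => _ w roll.
set a := dotv u nu.
have Hu : forall k, u k 0 = r * w k 0 + a * nu k 0.
  move=> k; move/matrixP: roll => /(_ k 0); rewrite !mxE => h.
  by apply/eqP; rewrite -subr_eq0 /a; apply/eqP; rewrite -h; ring.
have gn : gamma != 0 by rewrite gt_eqF.
have rn : r != 0 by rewrite gt_eqF.
have gp : 0 < 1 + gamma ^+ 2 by nra.
have gg : 1 + gamma ^+ 2 != 0 by rewrite gt_eqF.
rewrite /cgam /sgam; congr pair.
  apply/matrixP => i j; rewrite (ord1 j) !mxE Hu; field.
  by rewrite gn gg.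
apply/matrixP => i j; rewrite /wedge !mxE !big_ord1 !mxE !Hu; field.
by rewrite gn gg rn.
Qed.
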